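(* For every $\varepsilon>0$ there exists $\delta>0$ such that for all positive integers $k\leqslant d$ with $k\leqslant (1-\varepsilon)d$, $$n(k,d)\leqslant (2-\delta)^d.$$
   Context: A standard box in $\mathbb{R}^d$ is a set $K=K_1\times\cdots\times K_d$ where each $K_i\subset\mathbb{R}$ is a closed interval. For integers $1\leqslant k\leqslant d$, two standard boxes $K,L\subset\mathbb{R}^d$ are $k$-neighborly if $d-k\leqslant \dim(K\cap L)\leqslant d-1$, and a family of standard boxes is $k$-neighborly if every two distinct members are $k$-neighborly. $n(k,d)$ denotes the maximum possible cardinality of a $k$-neighborly family of standard boxes in $\mathbb{R}^d$. *)

(* Defs.v *)
From mathcomp Require Import all_boot all_order all_algebra.
From mathcomp Require Import reals.
Set Implicit Arguments. Unset Strict Implicit. Unset Printing Implicit Defensive.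
Import Order.TTheory GRing.Theory Num.Theory.
Local Open Scope ring_scope.

Record box (R : realType) (d : nat) := Box {
  lo : 'I_d -> R;
  hi : 'I_d -> R;
  lo_lt_hi : forall i, lo i < hi i }.

Definition inter_nonempty (R : realType) d (K L : box R d) : bool :=
  [forall i, Num.max (lo K i) (lo L i) <= Num.min (hi K i) (hi L i)].

Definition inter_dim (R : realType) d (K L : box R d) : nat :=
  #|[pred i : 'I_d | Num.max (lo K i) (lo L i) < Num.min (hi K i) (hi L i)]|.

(* K and L are k-neighborly: d - k <= dim (K ∩ L) <= d - 1
   (an empty intersection has dimension -1 < d - k, so it is excluded). *)
Definition k_neighborly (R : realType) (k d : nat) (K L : box R d) : Prop :=
  inter_nonempty K L /\ (d - k <= inter_dim K L)%N /\ (inter_dim K L <= d - 1)%N.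

Definition neighborly_family (R : realType) (k d m : nat) (F : 'I_m -> box R d)
  : Prop :=
  injective F /\ forall i j : 'I_m, i != j -> k_neighborly k (F i) (F j).

(* "n(k,d) <= x": every k-neighborly family of standard boxes in R^d has
   cardinality at most x. *)
Definition n_le (R : realType) (k d : nat) (x : R) : Prop :=
  forall (m : nat) (F : 'I_m -> box R d), neighborly_family k F -> m%:R <= x.

(* Main.v *)
Require Import Defs.
From mathcomp Require Import all_boot all_order all_algebra.
From mathcomp Require Import reals.
From mathcomp Require Import zify ring lra.
Import Order.TTheory GRing.Theory Num.Theory.
Set Implicit Arguments. Unset Strict Implicit. Unset Printing Implicit Defensive.


Section Sec.
Variable T : eqType.
Variable x0 : T.
Definition sec (h : T) (F : seq (seq T)) : seq (seq T) :=
  [seq behead u | u <- F & head x0 u == h].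

Lemma sec_cons d h F t : {in F, forall u, size u = d.+1} ->
  t \in sec h F -> (h :: t) \in F.
Proof.
move=> Hs /mapP [u]; rewrite mem_filter => /andP [/eqP Hh uF] ->.
by case: u Hh uF Hs => [|a u] /= Hh uF Hs; [have := Hs _ uF | rewrite -Hh].
Qed.

Lemma cons_sec h F t : (h :: t) \in F -> t \in sec h F.
Proof.
move=> Ht; apply/mapP; exists (h :: t) => //; by rewrite mem_filter /= eqxx.
Qed.

Lemma sec_uniq d h F : {in F, forall u, size u = d.+1} -> uniq F -> uniq (sec h F).
Proof.
move=> Hs U; rewrite map_inj_in_uniq ?filter_uniq //.
move=> u v; rewrite !mem_filter => /andP [/eqP Hu uF] /andP [/eqP Hv vF].
move: (Hs _ uF) (Hs _ vF).
case: u Hu uF => [|a u] Hu uF; case: v Hv vF => [|b v] Hv vF //= _ _ E.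
by move: Hu Hv => /= -> ->; rewrite E.
Qed.

Lemma sec_size d h F : {in F, forall u, size u = d.+1} ->
  {in sec h F, forall t, size t = d}.
Proof.
move=> Hs t /(sec_cons Hs) /Hs /= [] //.
Qed.

Lemma sec_sum (f : seq T -> nat) d h F : {in F, forall u, size u = d.+1} ->
  \sum_(t <- sec h F) f (h :: t) = \sum_(u <- F | head x0 u == h) f u.
Proof.
move=> Hs; rewrite big_map big_filter [LHS]big_seq_cond [RHS]big_seq_cond.
apply: eq_bigr => u /andP [uF /eqP Hh].
by case: u uF Hh => [|a u] uF Hh /=; [have := Hs _ uF | move: Hh => /= ->].
Qed.

Lemma sec_sumR (R : Type) (idx : R) (op : Monoid.com_law idx) (f : seq T -> R) d h F :
  {in F, forall u, size u = d.+1} ->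
  \big[op/idx]_(t <- sec h F) f (h :: t) = \big[op/idx]_(u <- F | head x0 u == h) f u.
Proof.
move=> Hs; rewrite big_map big_filter [LHS]big_seq_cond [RHS]big_seq_cond.
apply: eq_bigr => u /andP [uF /eqP Hh].
by case: u uF Hh => [|a u] uF Hh /=; [have := Hs _ uF | move: Hh => /= ->].
Qed.
End Sec.
Arguments sec_uniq {T x0 d h F}.
Arguments sec_sum {T x0} f {d h F}.
Arguments sec_sumR {T x0 R idx op} f {d h F}.
Arguments sec_size {T x0 d h F}.
Arguments sec_cons {T x0 d h F t}.
Arguments cons_sec {T x0 h F t}.

Definition cf (a b : option bool) : bool :=
  match a, b with Some x, Some y => x != y | _, _ => false end.
Fixpoint conf (u v : seq (option bool)) : nat :=
  match u, v with a :: u', b :: v' => cf a b + conf u' v' | _, _ => 0 end.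
Definition stars (u : seq (option bool)) : nat := count (fun a => a == None) u.

Lemma cf_refl a : cf a a = false.
Proof. by case: a => [[]|]. Qed.
Lemma conf_refl u : conf u u = 0.
Proof. by elim: u => //= a u ->; rewrite cf_refl. Qed.
Lemma cf_sym a b : cf a b = cf b a.
Proof. by case: a => [[]|]; case: b => [[]|]. Qed.
Lemma conf_sym u v : conf u v = conf v u.
Proof. by elim: u v => [|a u IH] [|b v] //=; rewrite cf_sym IH. Qed.
Lemma conf_le u v : (conf u v <= size u)%N.
Proof. elim: u v => [|a u IH] [|b v] /=; try by []. have := IH v; case: (cf a b) => /= H; lia. Qed.
Lemma conf_cat u1 u2 v1 v2 : size u1 = size u2 ->
  conf (u1 ++ v1) (u2 ++ v2) = (conf u1 u2 + conf v1 v2)%N.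
Proof.
elim: u1 u2 => [|a u IH] [|b v] //= [] /IH ->; by rewrite addnA.
Qed.

Definition disj d (F : seq (seq (option bool))) : Prop :=
  [/\ uniq F, {in F, forall u, size u = d} &
      {in F &, forall u v, u != v -> (0 < conf u v)%N}].

Lemma sum3 (f : seq (option bool) -> nat) F :
  \sum_(u <- F) f u = (\sum_(u <- F | head None u == Some false) f u +
     \sum_(u <- F | head None u == Some true) f u +
     \sum_(u <- F | head None u == None) f u)%N.
Proof.
rewrite (bigID (fun u => head None u == Some false)) /= -addnA; congr (_ + _)%N.
rewrite (bigID (fun u => head None u == Some true)) /=; congr (_ + _)%N.
- by apply: eq_bigl => u; case: (head None u) => [[]|].
- by apply: eq_bigl => u; case: (head None u) => [[]|].
Qed.

Lemma disj_sec d (h : bool) F : disj d.+1 F ->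
  disj d (sec None (Some h) F ++ sec None None F).
Proof.
move=> [U Hs Hc]; split.
- rewrite cat_uniq !(sec_uniq Hs) // andbT /=; apply/hasPn => t /(sec_cons Hs) tN.
  apply/negP => /(sec_cons Hs) th.
  have ne : (Some h :: t) != (None :: t) by [].
  by move: (Hc _ _ th tN ne); rewrite /= conf_refl.
- by move=> t; rewrite mem_cat => /orP [] /(sec_size Hs).
- have key : forall a b t t', a \in [:: Some h; None] -> b \in [:: Some h; None] ->
     (a :: t) \in F -> (b :: t') \in F -> t != t' -> (0 < conf t t')%N.
    move=> a b t t' Ha Hb ta tb ne.
    have := Hc _ _ ta tb; rewrite /=.
    have -> : cf a b = false.
      by move: Ha Hb; rewrite !inE => /orP [] /eqP -> /orP [] /eqP -> /=; rewrite ?eqxx.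
    apply; apply: contra ne => /eqP [_ ->] //.
  move=> t t'; rewrite !mem_cat => /orP [] /(sec_cons Hs) ta /orP [] /(sec_cons Hs) tb;
  apply: (key _ _ _ _ _ _ ta tb); by rewrite !inE eqxx ?orbT.
Qed.

Lemma star_sum d F : disj d F -> (\sum_(u <- F) 2 ^ stars u <= 2 ^ d)%N.
Proof.
elim: d F => [|d IH] F.
  move=> [U Hs _].
  have -> : \sum_(u <- F) 2 ^ stars u = \sum_(u <- F) 1.
    rewrite big_seq [RHS]big_seq; apply: eq_bigr => u /Hs.
    by case: u.
  rewrite sum1_size expn0.
  have -> : (1 = size [:: [::] : seq (option bool)])%N by [].
  apply: uniq_leq_size => // u /Hs; case: u => //; by rewrite inE.
move=> HF; have [U Hs Hc] := HF.
have H0 := IH _ (disj_sec false HF).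
have H1 := IH _ (disj_sec true HF).
rewrite big_cat /= in H0; rewrite big_cat /= in H1.
rewrite sum3 -!(sec_sum _ Hs).
have E : forall h, \sum_(t <- sec None (Some h) F) 2 ^ stars (Some h :: t) =
   \sum_(t <- sec None (Some h) F) 2 ^ stars t.
  by move=> h; apply: eq_bigr => t _.
rewrite !E.
have -> : \sum_(t <- sec None None F) 2 ^ stars (None :: t) =
   (\sum_(t <- sec None None F) 2 ^ stars t) * 2.
  rewrite big_distrl /=; apply: eq_bigr => t _.
  by rewrite /stars /= add1n expnS mulnC.
rewrite expnS (_ : forall a b c : nat, a + b + c * 2 = (a + c) + (b + c))%N; last by move=> *; lia.
by rewrite mul2n -addnn leq_add.
Qed.

Local Open Scope ring_scope.

Lemma key_ineq (R : realFieldType) (q a0 a1 s T0 T1 X : R) : 1 <= q -> 0 <= a0 -> 0 <= a1 ->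
  a0 <= s -> a1 <= s -> 0 <= T0 -> 0 <= T1 -> 0 <= X ->
  a0 * T0 <= X -> a1 * T1 <= X -> s * T0 <= q * X -> s * T1 <= q * X ->
  (a0 + a1) * (T0 + T1) <= (2 + q + q^-1) * X.
Proof.
move=> q1 a00 a10 a0s a1s T00 T10 X0 h0 h1 h0' h1'.
have q0 : 0 < q by lra.
have E : (2 + q + q^-1) * X = ((2 * q + q * q + 1) * X) / q.
  by field; lra.
rewrite E ler_pdivlMr //.
wlog a10a0 : a0 a1 T0 T1 a00 a10 a0s a1s T00 T10 h0 h1 h0' h1' {E} / a1 <= a0.
  move=> W; case: (lerP a1 a0) => H; first by apply: W.
  rewrite addrC (addrC T0); apply: W => //; lra.
have [a0z|a0p] := eqVneq a0 0.
  have a1z : a1 = 0 by lra.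
  rewrite a0z a1z; nra.
have a0p' : 0 < a0 by rewrite lt_def a0p a00.
have T1b : a0 * T1 <= q * X by nra.
case: (lerP (a1 * q) a0) => H.
  rewrite -(ler_pM2l a0p').
  have A : a0 * (T0 + T1) <= (1 + q) * X by nra.
  have B : (a0 + a1) * q <= a0 * (q + 1) by nra.
  have : (a0 + a1) * q * (a0 * (T0 + T1)) <= a0 * (q + 1) * ((1 + q) * X).
    apply: ler_pM => //; nra.
  move=> C.
  have L : a0 * ((a0 + a1) * (T0 + T1) * q) = (a0 + a1) * q * (a0 * (T0 + T1)) by ring.
  have Rr : a0 * ((2 * q + q * q + 1) * X) = a0 * (q + 1) * ((1 + q) * X) by ring.
  by rewrite L Rr.
have a1p : 0 < a1 by nra.
have P : 0 < a0 * a1 by nra.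
rewrite -(ler_pM2l P).
have F1 : a0 * a1 * ((a0 + a1) * (T0 + T1) * q)
   = a1 * q * (a0 + a1) * (a0 * T0) + a0 * q * (a0 + a1) * (a1 * T1) by ring.
rewrite F1.
have G : a1 * q * (a0 + a1) * (a0 * T0) + a0 * q * (a0 + a1) * (a1 * T1)
   <= a1 * q * (a0 + a1) * X + a0 * q * (a0 + a1) * X.
  apply: lerD; apply: ler_wpM2l => //; nra.
apply: le_trans G _.
have Hf : 0 <= (q * a1 - a0) * (q * a0 - a1) by apply: mulr_ge0; nra.
nra.
Qed.

Fixpoint hd (x y : seq bool) : nat :=
  match x, y with a :: x', b :: y' => ((a != b) + hd x' y')%N | _, _ => 0%N end.
Definition dA (x : seq bool) (A : seq (seq bool)) : nat :=
  foldr (fun a m => minn (hd x a) m) (size x) A.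
Fixpoint allw d : seq (seq bool) :=
  if d is d'.+1 then map (cons false) (allw d') ++ map (cons true) (allw d')
  else [:: [::]].

Lemma hd_le x y : (hd x y <= size x)%N.
Proof. elim: x y => [|a x IH] [|b y] //=; have := IH y; case: (a != b); lia. Qed.

Lemma hd_refl x : hd x x = 0%N.
Proof. by elim: x => //= a x ->; rewrite eqxx. Qed.

Lemma hd_neg x b : size x = size b -> hd (map negb x) b = (size x - hd x b)%N.
Proof.
elim: x b => [|a x IH] [|c b] //= [] /IH ->; have := hd_le x b.
by case: a; case: c => /=; lia.
Qed.

Lemma hd_tri x a b : size x = size a -> size a = size b ->
  (hd x b <= hd x a + hd a b)%N.
Proof.
elim: x a b => [|u x IH] [|v a] [|w b] //= [] E1 [] E2.
have := IH _ _ E1 E2; case: u; case: v; case: w => /=; lia.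
Qed.

Lemma dA_le x A a : a \in A -> (dA x A <= hd x a)%N.
Proof.
elim: A => //= a' A IH; rewrite inE => /orP [/eqP ->|/IH H].
  exact: geq_minl.
exact: leq_trans (geq_minr _ _) H.
Qed.

Lemma dA_ex x A : A != [::] -> exists2 a, a \in A & dA x A = hd x a.
Proof.
elim: A => //= a A IH _; rewrite /dA /= -/(dA x A).
case: (eqVneq A [::]) => [->|/IH [b bA Hb]] /=.
  exists a; first by rewrite inE eqxx.
  by rewrite /dA /=; apply/minn_idPl; apply: hd_le.
case: (leqP (hd x a) (dA x A)) => H.
  exists a; first by rewrite inE eqxx.
  by [].
by exists b; first by rewrite inE bA orbT.
Qed.

Lemma size_allw d : size (allw d) = (2 ^ d)%N.
Proof. elim: d => //= d IH; rewrite size_cat !size_map IH expnS; lia. Qed.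

Lemma allw_size d x : x \in allw d -> size x = d.
Proof.
elim: d x => [|d IH] x /=; first by rewrite inE => /eqP ->.
by rewrite mem_cat => /orP [] /mapP [y /IH Hy ->] /=; rewrite Hy.
Qed.

Section Sums.
Variable R : realFieldType.

Lemma sum_allwS d (f : seq bool -> R) :
  \sum_(x <- allw d.+1) f x = \sum_(x <- allw d) f (false :: x) + \sum_(x <- allw d) f (true :: x).
Proof. by rewrite /= big_cat !big_map. Qed.

Lemma sum_neg d (f : seq bool -> R) :
  \sum_(x <- allw d) f x = \sum_(x <- allw d) f (map negb x).
Proof.
elim: d f => [|d IH] f; first by rewrite /= !big_seq1.
rewrite !sum_allwS /= addrC; congr (_ + _).
- exact: (IH (fun x => f (true :: x))).
- exact: (IH (fun x => f (false :: x))).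
Qed.
End Sums.

Lemma size_split d (A : seq (seq bool)) : {in A, forall u, size u = d.+1} ->
  size A = (size (sec false false A) + size (sec false true A))%N.
Proof.
move=> Hs.
have E : forall h, size (sec false h A) = \sum_(u <- A | head false u == h) 1%N.
  by move=> h; rewrite -(sec_sum (fun _ => 1%N) Hs) sum1_size.
rewrite !E -sum1_size (bigID (fun u => head false u == false)) /=; congr (_ + _)%N.
by apply: eq_bigl => u; case: (head false u).
Qed.

Lemma conc (R : realFieldType) (q : R) d A : 1 <= q -> uniq A ->
  {in A, forall a, size a = d} ->
  (size A)%:R * \sum_(x <- allw d) q ^+ dA x A <= (2 + q + q^-1) ^+ d.
Proof.
move=> q1; have q0 : 0 < q by lra.
have c0 : 0 <= 2 + q + q^-1 by rewrite !addr_ge0 // ?invr_ge0; lra.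
elim: d A => [|d IH] A U Hs.
  case: A U Hs => [|a [|b A]] U Hs; first by rewrite mul0r expr0.
    by rewrite /= big_seq1 /dA /= expr0 mulr1.
  have Ha : a = [::] by have := Hs a; rewrite inE eqxx => /(_ isT) /size0nil.
  have Hb : b = [::] by have := Hs b; rewrite !inE eqxx orbT => /(_ isT) /size0nil.
  by move: U; rewrite /= inE Ha Hb eqxx.
case: (eqVneq A [::]) => [->|An]; first by rewrite mul0r exprn_ge0.
set A0 := sec false false A; set A1 := sec false true A.
set As := undup (A0 ++ A1).
have sA := size_split Hs.
have U0 : uniq A0 := sec_uniq Hs U.
have U1 : uniq A1 := sec_uniq Hs U.
have S0 : {in A0, forall a, size a = d} := sec_size Hs.
have S1 : {in A1, forall a, size a = d} := sec_size Hs.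
have Us : uniq As := undup_uniq _.
have Ss : {in As, forall a, size a = d}.
  by move=> a; rewrite mem_undup mem_cat => /orP [/S0|/S1].
have I0 := IH _ U0 S0; have I1 := IH _ U1 S1; have Is := IH _ Us Ss.
have sub0 : (size A0 <= size As)%N.
  by apply: uniq_leq_size => // t tA; rewrite mem_undup mem_cat tA.
have sub1 : (size A1 <= size As)%N.
  by apply: uniq_leq_size => // t tA; rewrite mem_undup mem_cat tA orbT.
have Asn : As != [::].
  have [u uA] : exists u, u \in A.
    by case E : A An => [|u A'] // _; exists u; rewrite inE eqxx.
  have := Hs u uA; case: u uA => // b t uA _.
  have tAb : t \in sec false b A := cons_sec uA.
  have : t \in As by rewrite mem_undup mem_cat; move: tAb; case: (b) => ->; rewrite ?orbT.
  by case: (As).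
have Pb : forall (b : bool) x, sec false b A != [::] ->
    (dA (b :: x) A <= dA x (sec false b A))%N.
  move=> b x Hn; have [a' a'A ->] := dA_ex x Hn.
  apply: leq_trans (@dA_le (b :: x) A _ (sec_cons Hs a'A)) _; by rewrite /= eqxx.
have Ps : forall b x, (dA (b :: x) A <= (dA x As).+1)%N.
  move=> b x; have [a' a'A ->] := dA_ex x Asn.
  move: a'A; rewrite mem_undup mem_cat => /orP [] H.
  - apply: leq_trans (@dA_le (b :: x) A _ (sec_cons Hs H)) _; by case: b.
  - apply: leq_trans (@dA_le (b :: x) A _ (sec_cons Hs H)) _; by case: b.
have B1 : forall b, (size (sec false b A))%:R * \sum_(x <- allw d) q ^+ dA (b :: x) A
     <= (2 + q + q^-1) ^+ d.
  move=> b; case: (eqVneq (sec false b A) [::]) => [->|Hn]; first by rewrite mul0r exprn_ge0.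
  apply: le_trans (IH _ (sec_uniq Hs U) (sec_size Hs)).
  apply: ler_wpM2l => //; apply: ler_sum => x _; apply: ler_weXn2l => //; exact: Pb.
have B2 : forall b, (size As)%:R * \sum_(x <- allw d) q ^+ dA (b :: x) A
     <= q * (2 + q + q^-1) ^+ d.
  move=> b.
  have H : \sum_(x <- allw d) q ^+ dA (b :: x) A <= q * \sum_(x <- allw d) q ^+ dA x As.
    rewrite mulr_sumr; apply: ler_sum => x _; rewrite -exprS; apply: ler_weXn2l => //; exact: Ps.
  apply: le_trans (ler_wpM2l _ H) _ => //.
  rewrite mulrCA; apply: ler_wpM2l => //; lra.
rewrite sA natrD sum_allwS exprS.
apply: (key_ineq (s := (size As)%:R)) => //.
all: first [by rewrite ler_nat | by apply: sumr_ge0 => x _; apply: exprn_ge0; lra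
  | exact: exprn_ge0 | exact: B1 | exact: B2].
Qed.

Lemma sum_const_seq (R : realFieldType) (T : Type) (s : seq T) (c : R) :
  \sum_(x <- s) c = c *+ size s.
Proof. elim: s => [|a s IH]; by rewrite ?big_nil ?big_cons ?IH ?mulrS. Qed.

Lemma S_lower (R : realFieldType) (r : R) d D A : 1 <= r -> A != [::] ->
  {in A, forall a, size a = d} -> {in A &, forall a b, (hd a b <= D)%N} ->
  2 ^+ d * r ^+ (d - D) <= \sum_(x <- allw d) (r ^+ 2) ^+ dA x A.
Proof.
move=> r1 An Hs HD.
have r0 : 0 <= r by lra.
have pt : forall x, x \in allw d -> (d - D <= dA x A + dA (map negb x) A)%N.
  move=> x xw; have sx := allw_size xw.
  have [a aA Ea] := dA_ex x An; have [b bA Eb] := dA_ex (map negb x) An.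
  rewrite Ea Eb hd_neg; last by rewrite sx (Hs b bA).
  have := @hd_tri x a b; rewrite sx (Hs a aA) (Hs b bA) => /(_ erefl erefl).
  have := HD a b aA bA; have := hd_le x b; rewrite sx; lia.
have pt2 : forall x, x \in allw d ->
    2 * r ^+ (d - D) <= (r ^+ 2) ^+ dA x A + (r ^+ 2) ^+ dA (map negb x) A.
  move=> x xw; rewrite -!exprM !(mulnC 2) !exprM.
  set u := r ^+ dA x A; set v := r ^+ dA (map negb x) A.
  have : r ^+ (d - D) <= u * v by rewrite -exprD; apply: ler_weXn2l => //; exact: pt.
  have : 0 <= (u - v) * (u - v) by rewrite -expr2 sqr_ge0.
  rewrite !expr2; nra.
have E : 2 * \sum_(x <- allw d) (r ^+ 2) ^+ dA x A =
   \sum_(x <- allw d) ((r ^+ 2) ^+ dA x A + (r ^+ 2) ^+ dA (map negb x) A).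
  by rewrite big_split /= -(@sum_neg _ d (fun x => (r ^+ 2) ^+ dA x A)); ring.
have : 2 * (2 ^+ d * r ^+ (d - D)) <= 2 * \sum_(x <- allw d) (r ^+ 2) ^+ dA x A.
  have L : \sum_(x <- allw d) (2 * r ^+ (d - D)) <=
      \sum_(x <- allw d) ((r ^+ 2) ^+ dA x A + (r ^+ 2) ^+ dA (map negb x) A).
    rewrite [leLHS]big_seq [leRHS]big_seq; apply: ler_sum => x; exact: pt2.
  rewrite E; apply: le_trans L; rewrite sum_const_seq size_allw.
  by rewrite -[_ *+ (2 ^ d)]mulr_natr natrX le_eqVlt; apply/orP; left; apply/eqP; ring.
by rewrite ler_pM2l //; lra.
Qed.


Definition fill (u : seq (option bool)) : seq bool :=
  map (fun o => if o is Some b then b else false) u.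

Lemma size_fill u : size (fill u) = size u.
Proof. exact: size_map. Qed.

Lemma hd_fill u v : size u = size v ->
  (conf u v <= hd (fill u) (fill v) <= conf u v + stars u + stars v)%N.
Proof.
elim: u v => [|a u IH] [|b v] //= [] /IH.
rewrite /stars /=.
by case: a => [[]|]; case: b => [[]|] /=; lia.
Qed.

Definition wfam (k d : nat) (F : seq (seq (option bool))) : Prop :=
  [/\ uniq F, {in F, forall u, size u = d} &
      {in F &, forall u v, u != v -> (0 < conf u v <= k)%N}].

Lemma wfam_disj k d F : wfam k d F -> disj d F.
Proof. by move=> [U Hs Hc]; split => // u v uF vF /(Hc _ _ uF vF) /andP []. Qed.

Lemma many_bound k d J F : wfam k d F ->
  (count (fun u => J <= stars u)%N F * 2 ^ J <= 2 ^ d)%N.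
Proof.
move=> /wfam_disj HF; apply: leq_trans (star_sum HF).
elim: F {HF} => [|a F IH] //=; rewrite big_cons mulnDl.
apply: leq_add => //; case H: (J <= stars a)%N; rewrite ?mul1n ?mul0n //.
by rewrite leq_exp2l.
Qed.

Lemma few_bound (R : realFieldType) (r : R) k d J F : 1 <= r -> wfam k d F ->
  (count (fun u => stars u < J)%N F)%:R * 2 ^+ d * r ^+ (d - (k + 2 * J))
   <= (2 + r ^+ 2 + (r ^+ 2)^-1) ^+ d.
Proof.
move=> r1 [U Hs Hc].
have c0 : 0 <= 2 + r ^+ 2 + (r ^+ 2)^-1.
  by rewrite !addr_ge0 ?invr_ge0 ?sqr_ge0.
set A := map fill [seq u <- F | (stars u < J)%N].
have sA : size A = count (fun u => stars u < J)%N F by rewrite size_map size_filter.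
have SA : {in A, forall a, size a = d}.
  by move=> a /mapP [u]; rewrite mem_filter => /andP [_ /Hs Hu] ->; rewrite size_fill.
have UA : uniq A.
  rewrite map_inj_in_uniq ?filter_uniq // => u v; rewrite !mem_filter.
  move=> /andP [_ uF] /andP [_ vF] E; apply/eqP; apply: contraT => ne.
  have := Hc _ _ uF vF ne; have := hd_fill (etrans (Hs _ uF) (esym (Hs _ vF))).
  by rewrite E hd_refl; lia.
have HD : {in A &, forall a b, (hd a b <= k + 2 * J)%N}.
  move=> a b /mapP [u]; rewrite mem_filter => /andP [su uF] -> /mapP [v];
    rewrite mem_filter => /andP [sv vF] ->.
  case: (eqVneq u v) => [->|ne]; first by rewrite hd_refl.
  have := Hc _ _ uF vF ne; have := hd_fill (etrans (Hs _ uF) (esym (Hs _ vF))).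
  lia.
rewrite -sA.
case: (eqVneq A [::]) => [->|An]; first by rewrite !mul0r exprn_ge0.
have H1 := conc (q := r ^+ 2) (@exprn_ege1 _ 2 r r1) UA SA.
have H2 := S_lower r1 An SA HD.
apply: le_trans H1; rewrite -mulrA; apply: ler_wpM2l => //.
Qed.


Definition tens (F G : seq (seq (option bool))) := [seq u ++ v | u <- F, v <- G].

Lemma wfam_tens k1 d1 F k2 d2 G : wfam k1 d1 F -> wfam k2 d2 G ->
  wfam (k1 + k2) (d1 + d2) (tens F G).
Proof.
move=> [UF SF CF] [UG SG CG]; split.
- apply: allpairs_uniq => // -[u1 v1] [u2 v2] /allpairsP [[a b] /= [aF bG [-> ->]]]
    /allpairsP [[a' b'] /= [aF' bG' [-> ->]]] /= E.
  move: E => /eqP; rewrite eqseq_cat; last by rewrite SF ?SF.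
  by case/andP => /eqP -> /eqP ->.
- by move=> w /allpairsP [[a b] /= [aF bG ->]]; rewrite size_cat SF ?SG.
- move=> w w' /allpairsP [[a b] /= [aF bG ->]] /allpairsP [[a' b'] /= [aF' bG' ->]] ne.
  rewrite conf_cat; last by rewrite SF ?SF.
  case: (eqVneq a a') => [Ea|na].
    rewrite -Ea conf_refl add0n.
    have nb : b != b' by apply: contra ne => /eqP ->; rewrite Ea.
    by have := CG _ _ bG bG' nb; lia.
  have := CF _ _ aF aF' na.
  case: (eqVneq b b') => [->|nb]; first by rewrite conf_refl; lia.
  have := CG _ _ bG bG' nb; lia.
Qed.

Definition tpow F t := iter t (tens F) [:: [::]].

Lemma wfam_tpow k d F t : wfam k d F -> wfam (k * t) (d * t) (tpow F t).
Proof.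
move=> HF; elim: t => [|t IH].
  rewrite !muln0; split => //; first by move=> u; rewrite inE => /eqP ->.
  by move=> u v; rewrite !inE => /eqP -> /eqP ->; rewrite eqxx.
by rewrite /tpow iterS !mulnS; apply: wfam_tens.
Qed.

Lemma size_tpow F t : size (tpow F t) = (size F ^ t)%N.
Proof. by elim: t => //= t IH; rewrite size_allpairs expnS -IH. Qed.


Section An.
Variable R : realFieldType.

Lemma bern_up (x : R) n : 0 <= x -> (1 + x) ^+ n * (1 - n%:R * x) <= 1.
Proof.
move=> x0; elim: n => [|n IH]; first by rewrite expr0 mul0r subr0 mulr1.
rewrite exprSr -mulrA; apply: le_trans IH; apply: ler_wpM2l; first by apply: exprn_ge0; lra.
rewrite -natr1; have : 0 <= n%:R :> R by apply: ler0n.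
nra.
Qed.

Lemma bern_low (y : R) n : 0 <= y -> y <= 1 -> 1 - n%:R * y <= (1 - y) ^+ n.
Proof.
move=> y0 y1; elim: n => [|n IH]; first by rewrite expr0 mul0r subr0.
rewrite exprSr; apply: le_trans (_ : (1 - n%:R * y) * (1 - y) <= _).
  rewrite -natr1; have : 0 <= n%:R :> R by apply: ler0n. nra.
by apply: ler_wpM2r => //; lra.
Qed.

Lemma pow2_sum (a b : R) M : 0 <= a -> 0 <= b -> (a + b) ^+ M <= 2 ^+ M * (a ^+ M + b ^+ M).
Proof.
wlog ab : a b / a <= b.
  move=> W a0 b0; case: (lerP a b) => H; first exact: W.
  by rewrite addrC (addrC (a ^+ M)); apply: W => //; apply: ltW.
move=> a0 b0.
apply: le_trans (_ : (2 * b) ^+ M <= _).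
  by apply: lerXn2r; rewrite ?qualifE /=; lra.
rewrite exprMn; apply: ler_wpM2l; first by apply: exprn_ge0.
rewrite lerDr; exact: exprn_ge0.
Qed.

End An.

Section Param.
Variable R : realFieldType.

Lemma c_bound (N : nat) (r : R) : (0 < N)%N -> r = 1 + ((8 * N)%:R)^-1 ->
  (2 + r ^+ 2 + (r ^+ 2)^-1) ^+ (4 * N) < 2 ^+ (4 * N) * 2 ^+ (4 * N) * r ^+ 2.
Proof.
move=> N0 Hr.
set e : R := ((8 * N)%:R)^-1.
rewrite -/e in Hr.
have N8 : 1 <= (8 * N)%:R :> R by rewrite ler1n; lia.
have p8 : 0 < (8 * N)%:R :> R by apply: lt_le_trans ltr01 N8.
have e0 : 0 < e by rewrite invr_gt0.
have e1 : e <= 1 by rewrite invr_le1 // ?unitfE ?gt_eqF.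
have eN : (8 * N)%:R * e = 1 by rewrite mulfV // gt_eqF.
have r0 : 0 < r by rewrite Hr; lra.
set x := e ^+ 2 / 2.
have x0 : 0 <= x by rewrite /x; apply: divr_ge0; [apply: sqr_ge0 | lra].
have rinv : r^-1 <= 1 - e + e ^+ 2.
  rewrite -(ler_pM2l r0) mulfV; last by apply/negP => /eqP; lra.
  rewrite Hr; nra.
have h0 : 2 + r ^+ 2 + (r ^+ 2)^-1 = (r + r^-1) ^+ 2.
  by field; rewrite gt_eqF.
have h1 : r + r^-1 <= 2 * (1 + x).
  have hx : 2 * (1 + x) = 2 + e ^+ 2 by rewrite /x; field.
  by rewrite hx; move: rinv; rewrite Hr; lra.
have h2 : (2 + r ^+ 2 + (r ^+ 2)^-1) ^+ (4 * N) <= 2 ^+ (4 * N) * 2 ^+ (4 * N) * (1 + x) ^+ (8 * N).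
  have E : 2 ^+ (4 * N) * 2 ^+ (4 * N) * (1 + x) ^+ (8 * N) = ((2 * (1 + x)) ^+ 2) ^+ (4 * N).
    rewrite -exprM exprMn -exprD.
    have -> : (4 * N + 4 * N = 8 * N)%N by lia.
    have -> : (2 * (4 * N) = 8 * N)%N by lia.
    by [].
  rewrite E h0; apply: lerXn2r; rewrite ?qualifE /=.
  - by apply: exprn_ge0; apply: addr_ge0; [lra | by rewrite invr_ge0; lra].
  - by apply: exprn_ge0; apply: mulr_ge0; lra.
  - apply: lerXn2r; rewrite ?qualifE /=; try lra.
    by apply: addr_ge0; [lra | by rewrite invr_ge0; lra].
have h3 := bern_up (8 * N) x0.
have hx : (8 * N)%:R * x = e / 2 by rewrite /x expr2 !mulrA eN mul1r.
rewrite hx in h3.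
set P := (1 + x) ^+ (8 * N) in h2 h3.
have P0 : 0 <= P by apply: exprn_ge0; lra.
have h4 : P < r ^+ 2.
  have A : 1 < r ^+ 2 * (1 - e / 2).
    rewrite Hr expr2.
    have : 0 < e * (3 - e ^+ 2) by apply: mulr_gt0 => //; rewrite expr2; nra.
    move=> H; rewrite expr2 in H; nra.
  have B : 0 < 1 - e / 2 by lra.
  have : P * (1 - e / 2) < r ^+ 2 * (1 - e / 2) by lra.
  by rewrite ltr_pM2r.
apply: le_lt_trans h2 _; rewrite ltr_pM2l //.
by rewrite mulr_gt0 // exprn_gt0.
Qed.
End Param.


Section Main.
Variable R : realType.
Variable N : nat.
Hypothesis N0 : (0 < N)%N.

Definition rr : R := 1 + ((8 * N)%:R)^-1.
Definition cc : R := 2 + rr ^+ 2 + (rr ^+ 2)^-1.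
Definition tau : R := 2 ^+ (4 * N).-1.
Definition sig2 : R := cc ^+ (4 * N) / (2 ^+ (4 * N) * rr ^+ 2).
Definition sigm : R := Num.max tau sig2.
Definition Cst : R := 2 ^+ (4 * N) * (2 ^+ (3 * N) + 1).

Lemma rr1 : 1 <= rr.
Proof. rewrite /rr lerDl invr_ge0; exact: ler0n. Qed.

Lemma rr0 : 0 < rr.
Proof. have := rr1; lra. Qed.

Lemma sig2_ge0 : 0 <= sig2.
Proof.
have c0 : 0 <= cc by rewrite /cc !addr_ge0 ?invr_ge0 ?sqr_ge0.
have r0 := rr0.
apply: divr_ge0; first exact: exprn_ge0.
by rewrite mulr_ge0 // exprn_ge0 // ltW.
Qed.

Lemma tau_gt0 : 0 < tau.
Proof. by rewrite /tau exprn_gt0. Qed.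

Lemma sig_gt0 : 0 < sigm.
Proof. by rewrite /sigm lt_max tau_gt0. Qed.

Lemma sig_lt : sigm < 2 ^+ (4 * N).
Proof.
rewrite /sigm gt_max; apply/andP; split.
  rewrite /tau -[X in _ < 2 ^+ X](prednK (_ : (0 < 4 * N)%N)); last by lia.
  by rewrite exprS ltr_pMl ?exprn_gt0 // ltr1n.
rewrite /sig2 ltr_pdivrMr; last by rewrite mulr_gt0 ?exprn_gt0 ?rr0.
rewrite mulrA; exact: (c_bound N0 erefl).
Qed.

Lemma many_pow k d J F : (d <= N * (d - k))%N -> (d - k < 4 * J + 4)%N -> wfam k d F ->
  (count (fun u => J <= stars u)%N F ^ (4 * N) <= 2 ^ (3 * N) * (2 ^ (4 * N).-1) ^ d)%N.
Proof.
move=> Hd HJ HF; set m := count _ F.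
have H1 : ((m * 2 ^ J) ^ (4 * N) <= (2 ^ d) ^ (4 * N))%N.
  rewrite leq_exp2r; [exact: many_bound HF | lia].
rewrite expnMn -!expnM in H1.
rewrite -expnM -expnD -(leq_pmul2r (expn_gt0 2 (J * (4 * N)))).
apply: leq_trans H1 _; rewrite -expnD leq_exp2l //.
have : (N * (d - k) <= N * (4 * J + 3))%N by rewrite leq_mul2l; apply/orP; right; lia.
nia.
Qed.

Lemma few_pow k d J F : (d <= N * (d - k))%N -> (4 * J <= d - k)%N -> wfam k d F ->
  (count (fun u => stars u < J)%N F)%:R ^+ (4 * N) <= sig2 ^+ d.
Proof.
move=> Hd HJ HF; set f : R := (count _ F)%:R.
set E := (d - (k + 2 * J))%N.
have hE : (2 * d <= E * (4 * N))%N.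
  have : (N * (d - k) <= N * (2 * E))%N by rewrite leq_mul2l; apply/orP; right; lia.
  nia.
have r0 := rr0; have r1 := rr1.
have f0 : 0 <= f by apply: ler0n.
have c0 : 0 <= cc by rewrite /cc !addr_ge0 ?invr_ge0 ?sqr_ge0.
have hf := few_bound J rr1 HF; rewrite -/f -/E -/cc in hf.
have H1 : (f * 2 ^+ d * rr ^+ E) ^+ (4 * N) <= (cc ^+ d) ^+ (4 * N).
  apply: lerXn2r => //; rewrite qualifE /= ?mulr_ge0 ?exprn_ge0 //; lra.
have E1 : (f * 2 ^+ d * rr ^+ E) ^+ (4 * N) =
    f ^+ (4 * N) * 2 ^+ (d * (4 * N)) * rr ^+ (E * (4 * N)).
  by rewrite !exprMn !exprM.
have E2 : f ^+ (4 * N) * (2 ^+ (4 * N) * rr ^+ 2) ^+ d =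
    f ^+ (4 * N) * 2 ^+ (d * (4 * N)) * rr ^+ (2 * d).
  by rewrite exprMn -!exprM mulrA (mulnC (4 * N) d).
have H2 : f ^+ (4 * N) * (2 ^+ (4 * N) * rr ^+ 2) ^+ d <= (cc ^+ (4 * N)) ^+ d.
  rewrite E2 exprAC; apply: le_trans H1; rewrite E1.
  apply: ler_wpM2l; first by rewrite mulr_ge0 ?exprn_ge0.
  exact: ler_weXn2l.
rewrite /sig2 expr_div_n ler_pdivlMr //.
by rewrite exprn_gt0 // mulr_gt0 ?exprn_gt0.
Qed.

Lemma core_pow k d F : (d <= N * (d - k))%N -> wfam k d F ->
  (size F)%:R ^+ (4 * N) <= Cst * sigm ^+ d.
Proof.
move=> Hd HF.
set J := ((d - k) %/ 4)%N.
have hJ1 : (4 * J <= d - k)%N by rewrite /J; lia.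
have hJ2 : (d - k < 4 * J + 4)%N by rewrite /J; lia.
have Hm := many_pow Hd hJ2 HF.
have Hf := few_pow Hd hJ1 HF.
have sF : size F = (count (fun u => J <= stars u)%N F + count (fun u => stars u < J)%N F)%N.
  rewrite -(count_predC (fun u => J <= stars u)%N F); congr (_ + _)%N.
  by apply: eq_count => u /=; rewrite ltnNge.
rewrite sF natrD; apply: le_trans (pow2_sum _ (ler0n _ _) (ler0n _ _)) _.
rewrite /Cst -mulrA; apply: ler_wpM2l; first exact: exprn_ge0.
rewrite mulrDl mul1r; apply: lerD.
  apply: le_trans (_ : 2 ^+ (3 * N) * tau ^+ d <= _).
    by rewrite -natrX /tau -!natrX -natrM ler_nat.
  apply: ler_wpM2l; first exact: exprn_ge0.
  apply: lerXn2r; rewrite ?qualifE /= ?le_max ?lexx ?(ltW tau_gt0) //.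
apply: le_trans Hf _; apply: lerXn2r; rewrite ?qualifE /= ?le_max ?lexx ?orbT //.
- exact: sig2_ge0.
- by rewrite (ltW tau_gt0).
Qed.

Lemma bern_ge (z : R) n : 1 <= z -> 1 + n%:R * (z - 1) <= z ^+ n.
Proof.
move=> z1; elim: n => [|n IH]; first by rewrite mul0r addr0 expr0.
rewrite exprSr -natr1.
have : 0 <= n%:R :> R by apply: ler0n.
have : 1 <= z ^+ n by apply: exprn_ege1.
nra.
Qed.

Lemma word_final k d F : (d <= N * (d - k))%N -> wfam k d F ->
  (size F)%:R ^+ (4 * N) <= sigm ^+ d.
Proof.
move=> Hd HF.
set a : R := (size F)%:R ^+ (4 * N); set b := sigm ^+ d.
have b0 : 0 < b by rewrite exprn_gt0 // sig_gt0.
have C0 : 0 <= Cst by rewrite /Cst mulr_ge0 ?exprn_ge0 ?addr_ge0 ?exprn_ge0.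
have Ht : forall t, a ^+ t <= Cst * b ^+ t.
  move=> t.
  have Hdt : (d * t <= N * (d * t - k * t))%N.
    by rewrite -mulnBl mulnA leq_mul2r Hd orbT.
  have := core_pow Hdt (wfam_tpow t HF).
  by rewrite size_tpow natrX exprAC [sigm ^+ _]exprM.
rewrite leNgt; apply/negP => H.
set z := a / b.
have z1 : 1 < z by rewrite /z ltr_pdivlMr // mul1r.
have Hz : forall t, z ^+ t <= Cst.
  by move=> t; rewrite /z expr_div_n ler_pdivrMr; [exact: Ht | exact: exprn_gt0].
set t := Num.Def.archi_bound (Cst / (z - 1)).
have Ht1 : Cst / (z - 1) < t%:R by apply: archi_boundP; rewrite divr_ge0 //; lra.
have := bern_ge t (ltW z1); have := Hz t.
rewrite ltr_pdivrMr in Ht1; last by lra.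
lra.
Qed.

End Main.


Lemma cnt_enum (T : finType) (P : pred T) : count P (enum T) = #|[pred i | P i]|.
Proof.
rewrite cardE /enum_mem size_filter -enumT (@eq_filter _ _ predT) // filter_predT.
by apply: eq_count.
Qed.

Lemma conf_map (T : Type) (f g : T -> option bool) s :
  conf (map f s) (map g s) = count (fun i => cf (f i) (g i)) s.
Proof. by elim: s => //= a s ->. Qed.

Section Boxes.
Variable R : realType.
Variables (k d m : nat) (F : 'I_m.+1 -> box R d).
Hypothesis HF : neighborly_family k F.
Hypothesis d0 : (0 < d)%N.

Definition jst (i : 'I_d) : 'I_m.+1 := [arg max_(j > ord0) lo (F j) i]%O.
Definition pp (i : 'I_d) : R := lo (F (jst i)) i.

Lemma pp_ge j i : lo (F j) i <= pp i.
Proof. by rewrite /pp /jst; case: arg_maxP => // j0 _ H; apply: H. Qed.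

Lemma nonemp a b i : a != b ->
  Num.max (lo (F a) i) (lo (F b) i) <= Num.min (hi (F a) i) (hi (F b) i).
Proof.
move=> ne; have [_ H] := HF; have [/forallP Hn _] := H a b ne; exact: Hn.
Qed.

Lemma pp_le j i : pp i <= hi (F j) i.
Proof.
case: (eqVneq (jst i) j) => [<-|ne]; first exact/ltW/lo_lt_hi.
have := nonemp i ne; rewrite ge_max !le_min => /andP [/andP [_ H] _]; exact: H.
Qed.

Definition wc (K : box R d) (i : 'I_d) : option bool :=
  if hi K i == pp i then Some false else if lo K i == pp i then Some true else None.
Definition wb (K : box R d) : seq (option bool) := [seq wc K i | i <- enum 'I_d].

Lemma lt_aux (x p y : R) : x <= p -> p <= y -> (x < y) = ~~ ((x == p) && (y == p)).
Proof.
move=> xp py; case: (eqVneq x p) => [->|nx] /=; case: (eqVneq y p) => [->|ny] /=.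
- by rewrite ltxx.
- by apply/idP; rewrite lt_def ny /=; lra.
- by apply/idP; lra.
- by apply/idP; lra.
Qed.

Lemma coord_key a b i : a != b ->
  (Num.max (lo (F a) i) (lo (F b) i) < Num.min (hi (F a) i) (hi (F b) i))
  = ~~ cf (wc (F a) i) (wc (F b) i).
Proof.
move=> ne.
rewrite gt_max !lt_min (lo_lt_hi (F a) i) (lo_lt_hi (F b) i) /=.
rewrite (lt_aux (pp_ge a i) (pp_le b i)) (lt_aux (pp_ge b i) (pp_le a i)) andbT.
have na : ~~ ((lo (F a) i == pp i) && (hi (F a) i == pp i)).
  by rewrite -(lt_aux (pp_ge a i) (pp_le a i)) lo_lt_hi.
have nb : ~~ ((lo (F b) i == pp i) && (hi (F b) i == pp i)).
  by rewrite -(lt_aux (pp_ge b i) (pp_le b i)) lo_lt_hi.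
move: na nb; rewrite /wc.
case: (lo (F a) i == pp i); case: (hi (F a) i == pp i);
case: (lo (F b) i == pp i); case: (hi (F b) i == pp i) => //.
Qed.

Lemma dim_conf a b : a != b -> inter_dim (F a) (F b) = (d - conf (wb (F a)) (wb (F b)))%N.
Proof.
move=> ne; rewrite /wb conf_map cnt_enum /inter_dim.
have := cardC [pred i | cf (wc (F a) i) (wc (F b) i)]; rewrite card_ord.
have -> : #|[predC [pred i | cf (wc (F a) i) (wc (F b) i)]]| =
   #|[pred i : 'I_d | Num.max (lo (F a) i) (lo (F b) i) < Num.min (hi (F a) i) (hi (F b) i)]|.
  by apply: eq_card => i; rewrite !inE coord_key.
move=> E; by rewrite -[X in (X - _)%N]E addKn.
Qed.

Lemma box_wfam : wfam k d [seq wb (F j) | j <- enum 'I_m.+1].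
Proof.
have conf_ok : forall a b, a != b -> (0 < conf (wb (F a)) (wb (F b)) <= k)%N.
  move=> a b ne; have [_ H] := HF; have [_ [H1 H2]] := H a b ne.
  rewrite dim_conf // in H1 H2.
  have : (conf (wb (F a)) (wb (F b)) <= d)%N.
    by have := conf_le (wb (F a)) (wb (F b)); rewrite size_map size_enum_ord.
  lia.
split.
- rewrite map_inj_uniq ?enum_uniq // => a b E; apply/eqP; apply: contraT => ne.
  by have := conf_ok a b ne; rewrite E conf_refl.
- by move=> u /mapP [j _ ->]; rewrite size_map size_enum_ord.
- move=> u v /mapP [a _ ->] /mapP [b _ ->] ne; apply: conf_ok.
  by apply: contra ne => /eqP ->.
Qed.

End Boxes.



Unset Implicit Arguments.


Theorem corollary1 (R : realType) (eps : R) (heps : 0 < eps) :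
  exists delta : R, 0 < delta /\
    forall k d : nat, (0 < k)%N -> (k <= d)%N ->
      k%:R <= (1 - eps) * d%:R ->
      n_le k d ((2 - delta) ^+ d).
Proof.
set N := Num.Def.archi_bound (eps^-1).
have HN : eps^-1 < N%:R by apply: archi_boundP; rewrite invr_ge0 ltW.
have N0 : (0 < N)%N.
  by rewrite -(ltr0n R); apply: lt_trans HN; rewrite invr_gt0.
have epsN : 1 < eps * N%:R.
  by rewrite -(ltr_pM2l heps) mulfV ?gt_eqF in HN.
set s := @sigm R N.
have s0 : 0 < s := @sig_gt0 R N.
have sl : s < 2 ^+ (4 * N) := @sig_lt R N N0.
set P : R := 2 ^+ (4 * N).
have P0 : 0 < P by rewrite exprn_gt0.
have M1 : 1 <= (4 * N)%:R :> R by rewrite ler1n; lia.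
have sP0 : 0 < s / P by rewrite divr_gt0.
have sP1 : s / P < 1 by rewrite ltr_pdivrMr // mul1r.
set y : R := (1 - s / P) / (4 * N)%:R.
have My : (4 * N)%:R * y = 1 - s / P by rewrite /y mulrC divfK // gt_eqF //; lra.
have y0 : 0 < y by rewrite /y divr_gt0 //; lra.
have y1 : y <= 1.
  rewrite /y ler_pdivrMr; last by lra.
  lra.
have key : s <= (2 - 2 * y) ^+ (4 * N).
  have -> : 2 - 2 * y = 2 * (1 - y) by ring.
  rewrite exprMn -/P.
  have := bern_low (4 * N) (ltW y0) y1; rewrite My => H.
  have -> : s = P * (1 - (1 - s / P)) by field; rewrite gt_eqF.
  by rewrite ler_wpM2l // ltW.
exists (2 * y); split; first by lra.
move=> k d k0 kd hk m F HF.
have d0 : (0 < d)%N := leq_trans k0 kd.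
have t0 : 0 <= 2 - 2 * y by lra.
case: m F HF => [|m] F HF; first by rewrite exprn_ge0.
have Hd : (d <= N * (d - k))%N.
  rewrite -(ler_nat R) natrM natrB //.
  have D0 : 0 <= d%:R :> R by apply: ler0n.
  have N0' : 0 <= N%:R :> R by apply: ler0n.
  have E1 : eps * d%:R <= d%:R - k%:R by lra.
  have E2 : d%:R * 1 <= d%:R * (eps * N%:R) by apply: ler_wpM2l => //; lra.
  have E3 : N%:R * (eps * d%:R) <= N%:R * (d%:R - k%:R) by apply: ler_wpM2l.
  have E4 : d%:R * (eps * N%:R) = N%:R * (eps * d%:R) by ring.
  lra.
have W := box_wfam HF d0.
have Hw := @word_final R N N0 k d _ Hd W.
rewrite size_map size_enum_ord -/s in Hw.
have M0 : (0 < 4 * N)%N by rewrite muln_gt0 N0.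
rewrite -(@ler_pXn2r _ (4 * N) M0) ?qualifE /= ?exprn_ge0 ?ler0n //.
apply: le_trans Hw _; rewrite -exprAC.
by apply: lerXn2r; rewrite ?qualifE /= ?exprn_ge0 // ltW.
Qed.
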